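(* The problem of classifying $m\times n\times 3$ spatial matrices up to equivalence is wild, i.e., it contains the problem of classifying pairs of square matrices up to simultaneous similarity.
   Context: Matrices are over a field $k$. An $m\times n\times q$ spatial matrix is a family $[a_{ijk}]_{i=1}^m{}_{j=1}^n{}_{k=1}^q$ of elements of $k$ ($m,n$ arbitrary here, $q=3$). Two spatial matrices $[a_{ijk}],[a'_{ijk}]$ are equivalent if $a'_{i'j'k'}=\sum_{i,j,k}a_{ijk}r_{ii'}s_{jj'}t_{kk'}$ for nonsingular matrices $R=[r_{ii'}]$, $S=[s_{jj'}]$, $T=[t_{kk'}]$. The pair problem: pairs $(X,Y)$ of $r\times r$ matrices ($r$ arbitrary) up to simultaneous similarity $(X,Y)\mapsto(S^{-1}XS,S^{-1}YS)$. A matrix problem $\mathcal A$ is given by a set $\mathcal A_1$ of $a$-tuples of matrices and admissible transformations (''$A$ reduces to $A'$''). $\mathcal B$ contains $\mathcal A$ if there is a $b$-tuple $\mathcal T(x_1,\dots,x_a)$ of matrices whose entries are noncommutative polynomials in $x_1,\dots,x_a$ (substitution done blockwise, scalars $c$ becoming $cI$) such that (i) $\mathcal T(A)\in\mathcal B_1$ for $A\in\mathcal A_1$, and (ii) $A$ reduces to $A'$ iff $\mathcal T(A)$ reduces to $\mathcal T(A')$. A problem is wild if it contains the pair problem. *)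

(* Defs.v *)
From HB Require Import structures.
From mathcomp Require Import all_boot all_order all_algebra.
Set Implicit Arguments. Unset Strict Implicit. Unset Printing Implicit Defensive.
Import GRing.Theory.
Local Open Scope ring_scope.

(* Noncommutative polynomials in two variables x1, x2 with coefficients in F,
   given as formal expressions (only their evaluation is ever used). *)
Inductive ncpoly (F : Type) : Type :=
| NCconst of F
| NCx1
| NCx2
| NCadd of ncpoly F & ncpoly F
| NCmul of ncpoly F & ncpoly F.
Arguments NCx1 {F}.
Arguments NCx2 {F}.

Fixpoint nceval (F : fieldType) (r : nat) (P : ncpoly F) (X Y : 'M[F]_r)
  : 'M[F]_r :=
  match P with
  | NCconst c => c%:M
  | NCx1 => X
  | NCx2 => Y
  | NCadd P1 P2 => nceval P1 X Y + nceval P2 X Y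
  | NCmul P1 P2 => nceval P1 X Y *m nceval P2 X Y
  end.

Definition pair_similar (F : fieldType) (r : nat) (X Y X' Y' : 'M[F]_r) : Prop :=
  exists S : 'M[F]_r, S \in unitmx /\
    X' = invmx S *m X *m S /\ Y' = invmx S *m Y *m S.

Definition spatial (F : Type) (m n : nat) := 'I_m -> 'I_n -> 'I_3 -> F.

Definition spatial_equiv (F : fieldType) (m n : nat) (A A' : spatial F m n) : Prop :=
  exists (R : 'M[F]_m) (S : 'M[F]_n) (T : 'M[F]_3),
    [/\ R \in unitmx, S \in unitmx, T \in unitmx &
      forall i' j' k', A' i' j' k' =
        \sum_(i < m) \sum_(j < n) \sum_(k < 3) A i j k * R i i' * S j j' * T k k'].

Definition ncsubst (F : fieldType) (p q r : nat) (P : 'I_p -> 'I_q -> ncpoly F)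
  (X Y : 'M[F]_r) : 'M[F]_(\sum_(i < p) r, \sum_(j < q) r) :=
  @mxblock F p q (fun _ => r) (fun _ => r) (fun i j => nceval (P i j) X Y).

Definition spatial_of_triple (F : fieldType) (p q r : nat)
  (T : 'I_3 -> 'I_p -> 'I_q -> ncpoly F) (X Y : 'M[F]_r)
  : spatial F (\sum_(i < p) r) (\sum_(j < q) r) :=
  fun i j k => ncsubst (T k) X Y i j.

(* Main.v *)
From HB Require Import structures.
From mathcomp Require Import all_boot all_order all_algebra.
Require Import Defs.
From mathcomp Require Import ring.
Set Implicit Arguments. Unset Strict Implicit. Unset Printing Implicit Defensive.
Import GRing.Theory.
Local Open Scope ring_scope.

Section Gen.
Variable F : fieldType.

Lemma blk_mul (p q s : nat) (pp : 'I_p -> nat) (qq : 'I_q -> nat) (ss : 'I_s -> nat)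
  (A : 'M[F]_(\sum_i pp i, \sum_j qq j)) (B : 'M[F]_(\sum_j qq j, \sum_k ss k)) i k :
  submxblock (A *m B) i k = \sum_j submxblock A i j *m submxblock B j k.
Proof.
transitivity (submxblock ((\mxblock_(i, j) submxblock A i j) *m
                          (\mxblock_(j, k) submxblock B j k)) i k).
  by rewrite !submxblockK.
by rewrite mul_mxblock mxblockK.
Qed.

Lemma blk_scale (p q : nat) (pp : 'I_p -> nat) (qq : 'I_q -> nat) a
  (A : 'M[F]_(\sum_i pp i, \sum_j qq j)) i j :
  submxblock (a *: A) i j = a *: submxblock A i j.
Proof. by apply/matrixP => x y; rewrite !mxE. Qed.

Lemma blk_diag (p : nat) (r : nat) (D : 'I_p -> 'M[F]_r) i j :
  submxblock (\mxdiag_i D i : 'M_(\sum_(i < p) r)) i j = if i == j then D i else 0.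
Proof. by rewrite /mxdiag mxblockK conform_mx_id. Qed.

Lemma blk1 (p : nat) (r : nat) i j :
  submxblock (1%:M : 'M[F]_(\sum_(i < p) r)) i j = if i == j then 1%:M else 0.
Proof. by rewrite -(mxdiagZ (p_ := fun _ : 'I_p => r)) blk_diag. Qed.

Definition sl (m n : nat) (A : spatial F m n) (k : 'I_3) : 'M[F]_(m, n) :=
  \matrix_(i, j) A i j k.

Lemma equivE (m n : nat) (A A' : spatial F m n) :
  spatial_equiv A A' <->
  exists (R : 'M[F]_m) (S : 'M[F]_n) (T : 'M[F]_3),
    [/\ R \in unitmx, S \in unitmx, T \in unitmx &
      forall k', sl A' k' = R^T *m (\sum_k T k k' *: sl A k) *m S].
Proof.
have key : forall (R : 'M[F]_m) (S : 'M[F]_n) (T : 'M[F]_3) k' i' j',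
  (R^T *m (\sum_k T k k' *: sl A k) *m S) i' j' =
  \sum_(i < m) \sum_(j < n) \sum_(k < 3) A i j k * R i i' * S j j' * T k k'.
  move=> R S T k' i' j'; rewrite !mxE.
  under eq_bigr do rewrite !mxE mulr_suml.
  rewrite exchange_big /=; apply: eq_bigr => i _.
  apply: eq_bigr => j _; rewrite !mxE summxE mulr_sumr mulr_suml.
  by apply: eq_bigr => k _; rewrite !mxE; ring.
split.
  case=> R [S [T [uR uS uT H]]]; exists R, S, T; split => // k'.
  by apply/matrixP => i' j'; rewrite key mxE H.
case=> R [S [T [uR uS uT H]]]; exists R, S, T; split => // i' j' k'.
by rewrite -key -H mxE.
Qed.

End Gen.

Section Fwd.
Variable F : fieldType.

Lemma nceval_conj r (P : ncpoly F) (X Y S : 'M[F]_r) : S \in unitmx ->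
  invmx S *m nceval P X Y *m S = nceval P (invmx S *m X *m S) (invmx S *m Y *m S).
Proof.
move=> uS; elim: P => [c| | |P1 IH1 P2 IH2|P1 IH1 P2 IH2] //=.
- by rewrite mul_mx_scalar -scalemxAl mulVmx // scalemx1.
- by rewrite mulmxDr mulmxDl IH1 IH2.
- rewrite -IH1 -IH2 !mulmxA; congr (_ *m _).
  by rewrite -!mulmxA [S *m (invmx S *m _)]mulmxA mulmxV // mul1mx.
Qed.

Lemma sl_triple p q r (T : 'I_3 -> 'I_p -> 'I_q -> ncpoly F) (X Y : 'M[F]_r) k :
  sl (spatial_of_triple T X Y) k = ncsubst (T k) X Y.
Proof. by apply/matrixP => i j; rewrite mxE. Qed.

Lemma diag_unit p r (S : 'M[F]_r) : S \in unitmx ->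
  (\mxdiag_(i < p) S : 'M_(\sum_(i < p) r)) \in unitmx.
Proof.
move=> uS; suff /mulmx1_unit[] : (\mxdiag_(i < p) S : 'M_(\sum_(i < p) r)) *m \mxdiag_(i < p) invmx S = 1%:M by [].
apply/mxblockP => i j; rewrite blk_mul blk1.
rewrite (bigD1 i) //= big1 => [|k /negbTE nk]; last by rewrite blk_diag eq_sym nk mul0mx.
rewrite !blk_diag eqxx addr0; case: eqP => _; last by rewrite mulmx0.
by rewrite mulmxV.
Qed.

Lemma fwd p q r (T : 'I_3 -> 'I_p -> 'I_q -> ncpoly F) (X Y X' Y' : 'M[F]_r) :
  pair_similar X Y X' Y' ->
  spatial_equiv (spatial_of_triple T X Y) (spatial_of_triple T X' Y').
Proof.
case=> S [uS [-> ->]]; apply/equivE.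
exists (\mxdiag_(i < p) invmx S)^T, (\mxdiag_(i < q) S), 1%:M.
split; rewrite ?unitmx_tr ?diag_unit ?unitmx1 ?unitmx_inv // => k'.
have -> : \sum_k (1%:M : 'M[F]_3) k k' *: sl (spatial_of_triple T X Y) k =
   sl (spatial_of_triple T X Y) k'.
  rewrite (bigD1 k') //= [X in _ + X]big1 => [|k /negbTE nk]; last first.
    by rewrite mxE nk scale0r.
  by rewrite mxE eqxx scale1r addr0.
rewrite trmxK !sl_triple.
apply/mxblockP => i j; rewrite !blk_mul.
rewrite (bigD1 j) //= [X in _ + X]big1 => [|k /negbTE nk]; last by rewrite blk_diag nk mulmx0.
rewrite addr0 blk_diag eqxx blk_mul (bigD1 i) //= [X in _ + X]big1 => [|k /negbTE nk]; last first.
  by rewrite blk_diag eq_sym nk mul0mx.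
by rewrite addr0 blk_diag eqxx /ncsubst !mxblockK nceval_conj.
Qed.

End Fwd.

Section Constr.
Variable F : fieldType.

Definition cst (c : F) : ncpoly F := NCconst c.

Definition bp (k b d : nat) : ncpoly F :=
  match k, b, d with
  | 0, 0, 0 => cst 1 | 0, 1, 1 => cst 1
  | 1, 0, 0 => cst 1 | 1, 0, 2 => NCx1 | 1, 0, 3 => cst 1
  | 1, 1, 2 => NCx2 | 1, 1, 3 => cst 1
  | 2, 0, 2 => cst 1 | 2, 1, 3 => cst 1
  | _, _, _ => cst 0
  end%N.

Definition tailn (m : nat) : nat := if m == 0%N then 0%N else if (m < 3)%N then 1%N else 2%N.

Definition tp (k i j : nat) : ncpoly F :=
  if (i < 2)%N then (if (j < 4)%N then bp k i j else cst 0)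
  else if (j < 4)%N then cst 0
  else if (i - 2 == j - 4)%N && (tailn (i - 2) == k) then cst 1 else cst 0.

Definition Tp : 'I_3 -> 'I_(2 + 7) -> 'I_(4 + 7) -> ncpoly F :=
  fun k i j => tp k i j.

Definition Bl (a : 'I_2) : 'I_(2 + 7) := lshift 7 a.
Definition El (m : 'I_7) : 'I_(2 + 7) := rshift 2 m.
Definition Bc (d : 'I_4) : 'I_(4 + 7) := lshift 7 d.
Definition Ec (m : 'I_7) : 'I_(4 + 7) := rshift 4 m.

Lemma tailn_lt m : (tailn m < 3)%N.
Proof. by rewrite /tailn; case: (m == 0)%N; case: (m < 3)%N. Qed.

Definition tailo (m : 'I_7) : 'I_3 := inord (tailn m).

Lemma tailoE m : nat_of_ord (tailo m) = tailn m.
Proof. by rewrite /tailo inordK // tailn_lt. Qed.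

Lemma TpBB k a d : Tp k (Bl a) (Bc d) = bp k a d.
Proof. by rewrite /Tp /tp /= (ltn_ord a) (ltn_ord d). Qed.

Lemma TpBE k a m : Tp k (Bl a) (Ec m) = cst 0.
Proof. by rewrite /Tp /tp /= (ltn_ord a). Qed.

Lemma TpEB k m d : Tp k (El m) (Bc d) = cst 0.
Proof. by rewrite /Tp /tp /= (ltn_ord d). Qed.

Lemma TpEE k m m' : Tp k (El m) (Ec m') =
  if (m == m') && (tailo m == k) then cst 1 else cst 0.
Proof.
rewrite /Tp /tp /=.
by rewrite !addKn -(inj_eq val_inj) /= -tailoE.
Qed.

Lemma sum_rows (V : nmodType) (f : 'I_(2 + 7) -> V) :
  \sum_i f i = \sum_(a < 2) f (Bl a) + \sum_(m < 7) f (El m).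
Proof. exact: big_split_ord. Qed.

Lemma sum_cols (V : nmodType) (f : 'I_(4 + 7) -> V) :
  \sum_i f i = \sum_(a < 4) f (Bc a) + \sum_(m < 7) f (Ec m).
Proof. exact: big_split_ord. Qed.

Variable r : nat.

Definition G (c : 'I_3 -> F) (X Y : 'M[F]_r) i j :=
  \sum_k c k *: nceval (Tp k i j) X Y.

Lemma GEB c X Y m d : G c X Y (El m) (Bc d) = 0.
Proof. by rewrite /G big1 // => k _; rewrite TpEB /= raddf0 scaler0. Qed.
Lemma GBE c X Y a m : G c X Y (Bl a) (Ec m) = 0.
Proof. by rewrite /G big1 // => k _; rewrite TpBE /= raddf0 scaler0. Qed.
Lemma GEE c X Y m m' : G c X Y (El m) (Ec m') =
  if m == m' then (c (tailo m))%:M else 0.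
Proof.
rewrite /G (bigD1 (tailo m)) //= [X in _ + X]big1 => [|k /negbTE nk]; last first.
  by rewrite TpEE (eq_sym (tailo m)) nk andbF /= raddf0 scaler0.
rewrite TpEE eqxx andbT addr0; case: eqP => _ /=.
  by rewrite scalemx1.
by rewrite raddf0 scaler0.
Qed.
Lemma GBB c X Y a d : G c X Y (Bl a) (Bc d) = \sum_k c k *: nceval (bp k a d) X Y.
Proof. by rewrite /G; apply: eq_bigr => k _; rewrite TpBB. Qed.

End Constr.

Lemma ord2_cases (a : 'I_2) : a = ord0 \/ a = lift ord0 ord0.
Proof. by case: a => [[|[|n]] H] //; [left|right]; apply: val_inj. Qed.
Lemma ord3_cases (a : 'I_3) :
  [\/ a = ord0, a = lift ord0 ord0 | a = lift ord0 (lift ord0 ord0)].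
Proof. by case: a => [[|[|[|n]]] H] //; [apply: Or31|apply: Or32|apply: Or33]; apply: val_inj. Qed.
Lemma ord4_cases (a : 'I_4) :
  [\/ a = ord0, a = lift ord0 ord0, a = lift ord0 (lift ord0 ord0) |
      a = lift ord0 (lift ord0 (lift ord0 ord0))].
Proof.
by case: a => [[|[|[|[|n]]]] H] //; [apply: Or41|apply: Or42|apply: Or43|apply: Or44];
  apply: val_inj.
Qed.

Section Pure.
Variable F : fieldType.

Lemma ann1 r (e0 e1 e2 : F) (Y0 Y1 : 'M[F]_r) :
  e0 *: Y0 + e1 *: Y0 = 0 -> e0 *: Y1 = 0 -> e1 *: Y0 + (e1 *: Y1 + e2 *: Y1) = 0 ->
  (e0 != 0 -> Y0 = 0 /\ Y1 = 0) /\ (e0 = 0 -> e1 *: Y0 = 0 /\ (e1 + e2) *: Y1 = 0).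
Proof.
move=> H0 H1 H3; split.
  move=> ne0; have Y10 : Y1 = 0.
    by move/eqP: H1; rewrite scaler_eq0 (negbTE ne0) /= => /eqP.
  split => //; move: H3; rewrite Y10 !scaler0 !addr0 => H3.
  by move: H0; rewrite H3 addr0 => /eqP; rewrite scaler_eq0 (negbTE ne0) /= => /eqP.
move=> e00; move: H0; rewrite e00 scale0r add0r => H0; split => //.
by move: H3; rewrite H0 add0r scalerDl.
Qed.

Lemma scale_eq0 r (e : F) (Y0 : 'M[F]_r) : e *: Y0 = 0 -> e != 0 -> Y0 = 0.
Proof. by move/eqP; rewrite scaler_eq0 => /orP[/eqP->|/eqP//]; rewrite eqxx. Qed.

Lemma ann2 r (e0 e1 e2 f0 f1 f2 : F) (Y0 Y1 : 'M[F]_r) :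
  [|| e0 != 0, f0 != 0 | ((e1 != 0) || (f1 != 0)) && ((e1 + e2 != 0) || (f1 + f2 != 0))] ->
  e0 *: Y0 + e1 *: Y0 = 0 -> e0 *: Y1 = 0 -> e1 *: Y0 + (e1 *: Y1 + e2 *: Y1) = 0 ->
  f0 *: Y0 + f1 *: Y0 = 0 -> f0 *: Y1 = 0 -> f1 *: Y0 + (f1 *: Y1 + f2 *: Y1) = 0 ->
  Y0 = 0 /\ Y1 = 0.
Proof.
move=> nd He0 He1 He3 Hf0 Hf1 Hf3.
have [Ae Be] := ann1 He0 He1 He3; have [Af Bf] := ann1 Hf0 Hf1 Hf3.
case/or3P: nd => [/Ae//|/Af//|/andP[h1 h2]].
have [e00|ne0] := eqVneq e0 0; last exact: Ae.
have [f00|nf0] := eqVneq f0 0; last exact: Af.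
have [Ee1 Ee2] := Be e00; have [Ff1 Ff2] := Bf f00.
split.
  by case/orP: h1 => h; [apply: scale_eq0 Ee1 h|apply: scale_eq0 Ff1 h].
by case/orP: h2 => h; [apply: scale_eq0 Ee2 h|apply: scale_eq0 Ff2 h].
Qed.


Lemma colnz (T : 'M[F]_3) k : T \in unitmx -> (forall i, T i k = 0) -> False.
Proof.
move=> uT H.
have : T *m delta_mx k (ord0 : 'I_1) = 0.
  apply/matrixP => i j; rewrite !mxE (bigD1 k) //= big1 => [|l /negbTE nl].
    by rewrite !mxE !eqxx H mul0r addr0.
  by rewrite !mxE nl mulr0.
move/(congr1 (mulmx (invmx T))); rewrite mulKmx // mulmx0 => /matrixP /(_ k ord0).
by rewrite !mxE !eqxx => /eqP; rewrite oner_eq0.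
Qed.

Lemma dep (T : 'M[F]_3) k k' a b : T \in unitmx -> k != k' ->
  (forall i, T i k * a - T i k' * b = 0) -> a = 0 /\ b = 0.
Proof.
move=> uT nk H.
pose u : 'cV[F]_3 := a *: delta_mx k ord0 - b *: delta_mx k' ord0.
have : T *m u = 0.
  have nk' : k' != k by rewrite eq_sym.
  apply/matrixP => i j; rewrite ord1 [RHS]mxE.
  transitivity (T i k * a - T i k' * b); last exact: H i.
  rewrite !mxE (bigD1 k) //= (bigD1 k') //=.
  rewrite [X in _ + (_ + X)]big1 => [|l /andP[/negbTE nl /negbTE nl']]; last first.
    by rewrite !mxE nl nl' /= !mulr0n !mulr0 subr0 mulr0.
  rewrite !mxE !eqxx (negbTE nk) (negbTE nk') /=. ring.
move/(congr1 (mulmx (invmx T))); rewrite mulKmx // mulmx0 => /matrixP E.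
have := E k ord0; have := E k' ord0; rewrite !mxE !eqxx eq_sym (negbTE nk) /=.
rewrite !mulr0 !mulr1 subr0 add0r => h1 h2; split => //.
by move/eqP: h1; rewrite oppr_eq0 => /eqP.
Qed.

Lemma nondeg (T : 'M[F]_3) k k' : T \in unitmx -> k != k' ->
  [|| T ord0 k != 0, T ord0 k' != 0 |
     ((T (lift ord0 ord0) k != 0) || (T (lift ord0 ord0) k' != 0)) &&
     ((T (lift ord0 ord0) k + T (lift ord0 (lift ord0 ord0)) k != 0) ||
      (T (lift ord0 ord0) k' + T (lift ord0 (lift ord0 ord0)) k' != 0))].
Proof.
move=> uT nk.
have [h0|//] := eqVneq (T ord0 k) 0.
have [h0'|//] := eqVneq (T ord0 k') 0.
rewrite /=; apply/andP; split.
  rewrite -negb_and; apply/negP => /andP[/eqP h1 /eqP h1'].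
  case: (@dep T k k' (T (lift ord0 (lift ord0 ord0)) k')
                      (T (lift ord0 (lift ord0 ord0)) k) uT nk) => [i|a0 b0].
    by case: (ord3_cases i) => ->; rewrite ?h0 ?h0' ?h1 ?h1'; ring.
  by apply: (colnz uT (k := k)) => i; case: (ord3_cases i) => ->.
rewrite -negb_and; apply/negP => /andP[/eqP h1 /eqP h1'].
have e2 : T (lift ord0 (lift ord0 ord0)) k = - T (lift ord0 ord0) k.
  by apply/eqP; rewrite -addr_eq0 addrC h1.
have e2' : T (lift ord0 (lift ord0 ord0)) k' = - T (lift ord0 ord0) k'.
  by apply/eqP; rewrite -addr_eq0 addrC h1'.
case: (@dep T k k' (T (lift ord0 ord0) k') (T (lift ord0 ord0) k) uT nk) => [i|a0 b0].
  by case: (ord3_cases i) => ->; rewrite ?h0 ?h0' ?e2 ?e2'; ring.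
apply: (colnz uT (k := k)) => i; case: (ord3_cases i) => -> //.
by rewrite e2 b0 oppr0.
Qed.

End Pure.

Section Bwd.
Variables (F : fieldType) (r : nat) (X Y X' Y' : 'M[F]_r) (T : 'M[F]_3).

Definition col (k' : 'I_3) : 'I_3 -> F := fun k => T k k'.

Definition star (L : 'M[F]_(\sum_(i < 2 + 7) r)) (W : 'M[F]_(\sum_(j < 4 + 7) r)) :=
  forall k' i j, \sum_i2 submxblock L i i2 *m G (col k') X Y i2 j =
                 \sum_j2 nceval (Tp F k' i j2) X' Y' *m submxblock W j2 j.

Lemma star_of (R : 'M[F]_(\sum_(i < 2 + 7) r)) (S : 'M[F]_(\sum_(j < 4 + 7) r)) :
  S \in unitmx ->
  (forall k', sl (spatial_of_triple (Tp F) X' Y') k' =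
     R^T *m (\sum_k T k k' *: sl (spatial_of_triple (Tp F) X Y) k) *m S) ->
  star R^T (invmx S).
Proof.
move=> uS H k' i j.
have := congr1 (fun M => submxblock (M *m invmx S) i j) (H k').
rewrite /= mulmxK // !blk_mul => E.
transitivity (\sum_j2 submxblock (sl (spatial_of_triple (Tp F) X' Y') k') i j2
   *m submxblock (invmx S) j2 j); last first.
  by apply: eq_bigr => j2 _; rewrite sl_triple /ncsubst mxblockK.
rewrite E; apply: eq_bigr => i2 _.
rewrite submxblock_sum /G; congr (_ *m _); apply: eq_bigr => k _.
by rewrite blk_scale sl_triple /ncsubst mxblockK.
Qed.


Section Star.
Variables (L : 'M[F]_(\sum_(i < 2 + 7) r)) (W : 'M[F]_(\sum_(j < 4 + 7) r)).
Notation Lb := (submxblock L).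
Notation Wb := (submxblock W).

Lemma eqEB (hs : star L W) k' m d :
  \sum_(a < 2) Lb (El m) (Bl a) *m G (col k') X Y (Bl a) (Bc d) =
  if tailo m == k' then Wb (Ec m) (Bc d) else 0.
Proof.
have := hs k' (El m) (Bc d); rewrite sum_rows sum_cols.
rewrite [X in _ + X = _]big1 => [|m2 _]; last by rewrite GEB mulmx0.
rewrite addr0 => ->.
rewrite [X in X + _]big1 => [|d2 _]; last by rewrite TpEB /= raddf0 mul0mx.
rewrite add0r (bigD1 m) //= [X in _ + X]big1 => [|m2 /negbTE nm]; last first.
  by rewrite TpEE (eq_sym m) nm /= raddf0 mul0mx.
rewrite TpEE eqxx /= addr0; case: (tailo m == k').
  by rewrite /= mul1mx.
by rewrite /= raddf0 mul0mx.
Qed.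

Lemma eqs3 (hs : star L W) k' m : tailo m != k' ->
  let c := col k' in let Y0 := Lb (El m) (Bl ord0) in
  let Y1 := Lb (El m) (Bl (lift ord0 ord0)) in
  [/\ c ord0 *: Y0 + c (lift ord0 ord0) *: Y0 = 0, c ord0 *: Y1 = 0 &
      c (lift ord0 ord0) *: Y0 + (c (lift ord0 ord0) *: Y1 +
        c (lift ord0 (lift ord0 ord0)) *: Y1) = 0].
Proof.
move=> nk /=.
have := eqEB hs k' m ord0; rewrite (negbTE nk) !big_ord_recl big_ord0 !GBB.
rewrite !big_ord_recl !big_ord0 /=.
rewrite !(raddf0, scaler0, scalemx1, addr0, add0r, mulmx0, mulmxDr, mul_mx_scalar).
have := eqEB hs k' m (lift ord0 ord0); rewrite (negbTE nk) !big_ord_recl big_ord0 !GBB.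
rewrite !big_ord_recl !big_ord0 /=.
rewrite !(raddf0, scaler0, scalemx1, addr0, add0r, mulmx0, mulmxDr, mul_mx_scalar).
have := eqEB hs k' m (lift ord0 (lift ord0 (lift ord0 ord0)));
rewrite (negbTE nk) !big_ord_recl big_ord0 !GBB.
rewrite !big_ord_recl !big_ord0 /=.
rewrite !(raddf0, scaler0, scalemx1, addr0, add0r, mulmx0, mulmxDr, mul_mx_scalar).
by move=> h3 h1 h0; split.
Qed.

Lemma pick2 (j : 'I_3) : exists k k', [/\ k != k', j != k & j != k'].
Proof.
case: (ord3_cases j) => ->.
- by exists (lift ord0 ord0), (lift ord0 (lift ord0 ord0)).
- by exists ord0, (lift ord0 (lift ord0 ord0)).
- by exists ord0, (lift ord0 ord0).
Qed.

Lemma LEB (hs : star L W) (uT : T \in unitmx) m a : Lb (El m) (Bl a) = 0.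
Proof.
have [k [k' [nkk' nk nk']]] := pick2 (tailo m).
have [h0 h1 h3] := eqs3 hs nk; have [g0 g1 g3] := eqs3 hs nk'.
have [Y00 Y10] := ann2 (nondeg uT nkk') h0 h1 h3 g0 g1 g3.
by case: (ord2_cases a) => ->.
Qed.

Lemma WEB (hs : star L W) (uT : T \in unitmx) m d : Wb (Ec m) (Bc d) = 0.
Proof.
have := eqEB hs (tailo m) m d; rewrite eqxx => <-.
by rewrite big1 // => a _; rewrite LEB // mul0mx.
Qed.

Lemma eqEE (hs : star L W) k' m m' :
  Lb (El m) (El m') *m (col k' (tailo m'))%:M =
  if tailo m == k' then Wb (Ec m) (Ec m') else 0.
Proof.
have := hs k' (El m) (Ec m'); rewrite sum_rows sum_cols.
rewrite [X in X + _ = _]big1 => [|a _]; last by rewrite GBE mulmx0.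
rewrite add0r (bigD1 m') //= [X in _ + X = _]big1 => [|m2 /negbTE nm]; last first.
  by rewrite GEE nm mulmx0.
rewrite GEE eqxx addr0 => ->.
rewrite [X in X + _]big1 => [|d2 _]; last by rewrite TpEB /= raddf0 mul0mx.
rewrite add0r (bigD1 m) //= [X in _ + X]big1 => [|m2 /negbTE nm]; last first.
  by rewrite TpEE (eq_sym m) nm /= raddf0 mul0mx.
rewrite TpEE eqxx /= addr0; case: (tailo m == k').
  by rewrite /= mul1mx.
by rewrite /= raddf0 mul0mx.
Qed.

End Star.

Definition LE (L : 'M[F]_(\sum_(i < 2 + 7) r)) : 'M[F]_(\sum_(m < 7) r) :=
  \mxblock_(m, m') submxblock L (El m) (El m').
Definition WE (W : 'M[F]_(\sum_(j < 4 + 7) r)) : 'M[F]_(\sum_(m < 7) r) :=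
  \mxblock_(m, m') submxblock W (Ec m) (Ec m').
Definition Dg (c : 'I_3 -> F) : 'M[F]_(\sum_(m < 7) r) :=
  \mxdiag_(m < 7) ((c (tailo m))%:M : 'M_r).
Definition delta (k' : 'I_3) : 'I_3 -> F := fun k => (k == k')%:R.

Lemma eqEEmx L W (hs : star L W) k' : LE L *m Dg (col k') = Dg (delta k') *m WE W.
Proof.
apply/mxblockP => m m'; rewrite /LE /WE /Dg mul_mxblock_mxdiag mul_mxdiag_mxblock.
rewrite !mxblockK (eqEE hs) /delta; case: (tailo m == k').
  by rewrite mul1mx.
by rewrite raddf0 mul0mx.
Qed.


Lemma rank_sc (a : F) : \rank (a%:M : 'M[F]_r) = ((a != 0%R) * r)%N.
Proof.
have [->|na] := eqVneq a 0; first by rewrite raddf0 mxrank0.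
by rewrite -scalemx1 mxrank_scale_nz // mxrank1 mul1n.
Qed.

Lemma tailo_val (m : 'I_7) (j : 'I_3) : tailn m = j -> tailo m = j.
Proof. by move=> h; apply: val_inj; rewrite /= tailoE. Qed.

Lemma rank_Dg c : \rank (Dg c) =
  (((c ord0 != 0%R) + (c (lift ord0 ord0) != 0%R) * 2 +
    (c (lift ord0 (lift ord0 ord0)) != 0%R) * 4) * r)%N.
Proof.
rewrite /Dg rank_mxdiag !big_ord_recl big_ord0 !rank_sc.
have i0 : (inord 0 : 'I_3) = ord0 by apply: val_inj; rewrite /= inordK.
have i1 : (inord 1 : 'I_3) = lift ord0 ord0 by apply: val_inj; rewrite /= inordK.
have i2 : (inord 2 : 'I_3) = lift ord0 (lift ord0 ord0).
  by apply: val_inj; rewrite /= inordK.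
rewrite /tailo /= i0 i1 i2.
set x := (c ord0 != 0); set y := (c _ != 0); set z := (c _ != 0).
ring.
Qed.


Lemma LE_unit L W (hs : star L W) (uT : T \in unitmx) (uL : L \in unitmx) :
  LE L \in unitmx.
Proof.
suff /mulmx1_unit[] : LE L *m LE (invmx L) = 1%:M by [].
apply/mxblockP => m m'; rewrite /LE mul_mxblock mxblockK blk1.
have := congr1 (fun M => submxblock M (El m) (El m')) (mulmxV uL).
rewrite /= blk_mul blk1 sum_rows [X in X + _]big1 => [|a _]; last by rewrite (LEB hs) // mul0mx.
rewrite add0r (inj_eq (@rshift_inj 2 7)) => <-.
by [].
Qed.

Lemma WE_unit L W S (hs : star L W) (uT : T \in unitmx) (hWS : W *m S = 1%:M) :
  WE W \in unitmx.
Proof.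
suff /mulmx1_unit[] : WE W *m WE S = 1%:M by [].
apply/mxblockP => m m'; rewrite /WE mul_mxblock mxblockK blk1.
have := congr1 (fun M => submxblock M (Ec m) (Ec m')) hWS.
rewrite /= blk_mul blk1 sum_cols [X in X + _]big1 => [|a _]; last by rewrite (WEB hs) // mul0mx.
rewrite add0r (inj_eq (@rshift_inj 4 7)) => <-.
by [].
Qed.

Definition wtf (c : 'I_3 -> F) : nat :=
  ((c ord0 != 0%R) + (c (lift ord0 ord0) != 0%R) * 2 +
    (c (lift ord0 (lift ord0 ord0)) != 0%R) * 4)%N.

Lemma wt_eq L W S (hs : star L W) (uT : T \in unitmx) (uL : L \in unitmx)
  (hWS : W *m S = 1%:M) (r0 : (0 < r)%N) k' : wtf (col k') = wtf (delta k').
Proof.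
have : \rank (Dg (col k')) = \rank (Dg (delta k')).
  rewrite -(eqmxMfull _ (_ : row_full (LE L))); last by rewrite row_full_unit (LE_unit hs).
  rewrite (eqEEmx hs) mxrankMfree // row_free_unit (WE_unit hs uT hWS) //.
by rewrite !rank_Dg => /eqP; rewrite eqn_pmul2r // => /eqP.
Qed.

Lemma wt1 (a b c : F) :
  ((a != 0%R) + (b != 0%R) * 2 + (c != 0%R) * 4)%N = 1%N -> [/\ a != 0, b = 0 & c = 0].
Proof.
by case: (boolP (a == 0)) => [/eqP ha|ha]; case: (boolP (b == 0)) => [/eqP hb|hb];
  case: (boolP (c == 0)) => [/eqP hc|hc].
Qed.
Lemma wt2 (a b c : F) :
  ((a != 0%R) + (b != 0%R) * 2 + (c != 0%R) * 4)%N = 2%N -> [/\ a = 0, b != 0 & c = 0].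
Proof.
by case: (boolP (a == 0)) => [/eqP ha|ha]; case: (boolP (b == 0)) => [/eqP hb|hb];
  case: (boolP (c == 0)) => [/eqP hc|hc].
Qed.
Lemma wt4 (a b c : F) :
  ((a != 0%R) + (b != 0%R) * 2 + (c != 0%R) * 4)%N = 4%N -> [/\ a = 0, b = 0 & c != 0].
Proof.
by case: (boolP (a == 0)) => [/eqP ha|ha]; case: (boolP (b == 0)) => [/eqP hb|hb];
  case: (boolP (c == 0)) => [/eqP hc|hc].
Qed.

Lemma Tdiag L W S (hs : star L W) (uT : T \in unitmx) (uL : L \in unitmx)
  (hWS : W *m S = 1%:M) (r0 : (0 < r)%N) :
  (forall k k', k != k' -> T k k' = 0) /\ (forall k, T k k != 0).
Proof.
have H := wt_eq hs uT uL hWS r0.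
have key : forall k', (forall k, k != k' -> T k k' = 0) /\ T k' k' != 0.
  move=> k'; have := H k'; rewrite /wtf /col /delta.
  case: (ord3_cases k') => -> /=; rewrite ?eqxx ?oner_neq0 /=.
  - by case/wt1 => a b c; split => // k; case: (ord3_cases k) => ->.
  - by case/wt2 => a b c; split => // k; case: (ord3_cases k) => ->.
  - by case/wt4 => a b c; split => // k; case: (ord3_cases k) => ->.
split; last by move=> k; case: (key k).
by move=> k k' nk; case: (key k') => /(_ k nk).
Qed.


Lemma scal_unit_eq (A : 'M[F]_r) (a b : F) : (0 < r)%N -> A \in unitmx ->
  a *: A = b *: A -> a = b.
Proof.
move=> r0 uA /(congr1 (mulmx^~ (invmx A))).
rewrite -!scalemxAl mulmxV // !scalemx1 => /matrixP /(_ (Ordinal r0) (Ordinal r0)).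
by rewrite !mxE eqxx !mulr1n.
Qed.

Lemma eqBB L W (hs : star L W) (Td : forall k k', k != k' -> T k k' = 0) k' (a : 'I_2) (d : 'I_4) :
  \sum_(a2 < 2) submxblock L (Bl a) (Bl a2) *m (T k' k' *: nceval (bp F k' a2 d) X Y) =
  \sum_(d2 < 4) nceval (bp F k' a d2) X' Y' *m submxblock W (Bc d2) (Bc d).
Proof.
have := hs k' (Bl a) (Bc d); rewrite sum_rows sum_cols.
rewrite [X in _ + X = _]big1 => [|m _]; last by rewrite GEB mulmx0.
rewrite [X in _ = _ + X]big1 => [|m _]; last by rewrite TpBE /= raddf0 mul0mx.
rewrite !addr0 => E.
transitivity (\sum_(a2 < 2) submxblock L (Bl a) (Bl a2) *m G (col k') X Y (Bl a2) (Bc d)).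
  apply: eq_bigr => a2 _; rewrite GBB (bigD1 k') //= [X in _ + X]big1 ?addr0 //.
  by move=> k nk; rewrite /col Td // scale0r.
by rewrite E; apply: eq_bigr => d2 _; rewrite TpBB.
Qed.

Ltac expand := rewrite !big_ord_recl !big_ord0 /=
  !(raddf0, scaler0, scalemx1, mulmx0, mul0mx, mul1mx, mulmx1, addr0, add0r, mul_mx_scalar).

Lemma simB L W S (hs : star L W) (uT : T \in unitmx) (uL : L \in unitmx)
  (hWS : W *m S = 1%:M) (r0 : (0 < r)%N) : pair_similar X Y X' Y'.
Proof.
have [Td Tnz] := Tdiag hs uT uL hWS r0.
have E := eqBB hs Td.
set o1 := lift ord0 (ord0 : 'I_1).
set c1 := lift ord0 (ord0 : 'I_2).
set c2 := lift ord0 (lift ord0 (ord0 : 'I_1)) : 'I_3.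
set e1 := lift ord0 (ord0 : 'I_3).
set e2 := lift ord0 (lift ord0 (ord0 : 'I_2)).
set e3 := lift ord0 (lift ord0 (lift ord0 (ord0 : 'I_1))).
have Q00 := E c2 ord0 ord0; have Q10 := E c2 o1 ord0.
have Q01 := E c2 ord0 e1; have Q11 := E c2 o1 e1.
have Q02 := E c2 ord0 e2; have Q12 := E c2 o1 e2.
have Q03 := E c2 ord0 e3; have Q13 := E c2 o1 e3.
have P01 := E ord0 ord0 e1; have P02 := E ord0 ord0 e2; have P03 := E ord0 ord0 e3.
have C10 := E c1 o1 ord0; have C01 := E c1 ord0 e1.
have C02 := E c1 ord0 e2; have C12 := E c1 o1 e2.
have C03 := E c1 ord0 e3; have C13 := E c1 o1 e3.
move: Q00 Q10 Q01 Q11 Q02 Q12 Q03 Q13 P01 P02 P03 C10 C01 C02 C12 C03 C13.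
expand.
set t0 := T ord0 ord0; set t1 := T c1 c1; set t2 := T c2 c2.
set l00 := submxblock L (Bl ord0) (Bl ord0).
set l01 := submxblock L (Bl ord0) (Bl o1).
set l10 := submxblock L (Bl o1) (Bl ord0).
set l11 := submxblock L (Bl o1) (Bl o1).
move=> q20 q30 q21 q31 q22 q32 q23 q33 p01 p02 p03 C10 C01 C02 C12 C03 C13.
have nt0 : t0 != 0 by apply: Tnz.
have nt1 : t1 != 0 by apply: Tnz.
have nt2 : t2 != 0 by apply: Tnz.
have z10 : l10 = 0.
  by move: C10; rewrite -q20 -q30 mulmx0 addr0 => /scale_eq0; apply.
have z01 : l01 = 0.
  by move: C01; rewrite -p01 -q21 -q31 mulmx0 !addr0 => /esym /scale_eq0; apply.
have hVL := mulVmx uL.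
have v00 : submxblock (invmx L) (Bl ord0) (Bl ord0) *m l00 = 1%:M.
  have := congr1 (fun M => submxblock M (Bl ord0) (Bl ord0)) hVL.
  rewrite /= blk_mul blk1 eqxx sum_rows [X in _ + X]big1 => [|m _]; last first.
    by rewrite (LEB hs) // mulmx0.
  by rewrite addr0 !big_ord_recl big_ord0 addr0 -/l00 -/l10 z10 mulmx0 addr0.
have v11 : submxblock (invmx L) (Bl o1) (Bl o1) *m l11 = 1%:M.
  have := congr1 (fun M => submxblock M (Bl o1) (Bl o1)) hVL.
  rewrite /= blk_mul blk1 eqxx sum_rows [X in _ + X]big1 => [|m _]; last first.
    by rewrite (LEB hs) // mulmx0.
  by rewrite addr0 !big_ord_recl big_ord0 addr0 -/l11 -/l01 z01 [X in X + _]mulmx0 add0r.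
have u00 : l00 \in unitmx by case: (mulmx1_unit v00).
have u11 : l11 \in unitmx by case: (mulmx1_unit v11).
have t12 : t1 = t2.
  move: C13; rewrite -q23 -q33 z01 z10 !scaler0 mulmx0 !add0r.
  exact: scal_unit_eq.
have e0011 : l00 = l11.
  move: C03; rewrite -p03 -q23 -q33 z01 !scaler0 mulmx0 !addr0 !add0r -t12.
  exact: scalerI.
have hX : l00 *m X = X' *m l00.
  move: C02; rewrite -p02 -q22 -q32 z01 z10 !scaler0 mul0mx !addr0 add0r.
  by rewrite -!scalemxAr -t12; apply: scalerI.
have hY : l00 *m Y = Y' *m l00.
  move: C12; rewrite -q22 -q32 z10 !scaler0 mul0mx !addr0 add0r.
  by rewrite -!scalemxAr -t12 -e0011; apply: scalerI.
exists (invmx l00); split; first by rewrite unitmx_inv.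
rewrite invmxK; split.
  by rewrite hX mulmxK.
by rewrite hY mulmxK.
Qed.

End Bwd.

Theorem theorem4p2 (F : fieldType) :
  exists (p q : nat) (T : 'I_3 -> 'I_p -> 'I_q -> ncpoly F),
    forall (r : nat) (X Y X' Y' : 'M[F]_r),
      pair_similar X Y X' Y' <->
      spatial_equiv (spatial_of_triple T X Y) (spatial_of_triple T X' Y').
Proof.
exists (2 + 7)%N, (4 + 7)%N, (Tp F) => r X Y X' Y'; split; first exact: fwd.
case: (posnP r) => [r0|r0].
  move=> _; subst r; exists 1%:M; split; first exact: unitmx1.
  by split; apply/matrixP => -[].
case/equivE => R [S [T [uR uS uT H]]].
have hs := star_of uS H.
apply: (simB hs uT _ (mulVmx uS) r0).
by rewrite unitmx_tr.
Qed.
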